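(* Let $N\ge 2$, let $T_N$ be the homogeneous tree in which every vertex has degree $N$, and fix a root $o$. Let $m>1$ and assume either $(p,q)\in G_{5.1}=\{(p,q): p+q=m-1,\ p\ge0,\ q>0\}$, or $(p,q)\in G_{5.2}=\{(p,q): p+q=m-1,\ q<0\}$ with $1<m<3$. Then there exist $\lambda>0$ and a weight $\mu$ on $T_N$ such that $$W_o(n)\asymp e^{\lambda n}\quad\text{for } n\ge 2,$$ and the inequality $\Delta_m u+u^p|\nabla u|^q\le 0$ on $T_N$ admits a nontrivial positive solution.
   Context: A weight on a graph $(V,E)$ is a symmetric function $\mu:V\times V\to[0,\infty)$ with $\mu_{xy}=\mu_{yx}>0$ if and only if $x\sim y$ (adjacent); $\mu(x)=\sum_{y\sim x}\mu_{xy}$. For $m>1$, $\Delta_m u(x)=\frac{1}{\mu(x)}\sum_{y\sim x}\mu_{xy}|u(y)-u(x)|^{m-2}(u(y)-u(x))$ and $|\nabla u(x)|=\big(\sum_{y\sim x}\frac{\mu_{xy}}{2\mu(x)}(u(y)-u(x))^2\big)^{1/2}$. $d$ is the graph distance, $B(o,n)=\{x: d(o,x)\le n\}$, $W_o(n)=\sum_{x\in B(o,n),\,y\in V,\,d(o,x)<d(o,y)}\mu_{xy}$. $f(n)\asymp g(n)$ for $n\ge2$ means there are constants $c,C>0$ with $c\,g(n)\le f(n)\le C\,g(n)$ for all $n\ge 2$. A nontrivial positive solution is a non-constant $u:V\to(0,\infty)$ with $\Delta_m u(x)+u(x)^p|\nabla u(x)|^q\le0$ for all $x\in V$. *)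

(* Defs.v *)
From HB Require Import structures.
From mathcomp Require Import all_boot all_order all_algebra.
From mathcomp Require Import all_classical all_reals all_analysis.
Set Implicit Arguments. Unset Strict Implicit. Unset Printing Implicit Defensive.
Import Order.TTheory GRing.Theory Num.Theory.
Local Open Scope ring_scope.

(* A vertex is a word [a_1; ...; a_k] of naturals with a_1 < N and a_i < N-1
   for i >= 2.  The root o is the empty word; the children of the root are
   [:: a] (a < N), the children of a non-root word x are rcons x a (a < N-1);
   each vertex is adjacent to its children and to its parent.  Hence every
   vertex has degree N. *)
Definition validw (N : nat) (s : seq nat) : bool :=
  match s with
  | [::] => true
  | a :: t => (a < N)%N && all (fun b => b < N.-1)%N t
  end.

Definition child (x y : seq nat) : bool :=
  (size y == (size x).+1) && (take (size x) y == x).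

Definition adj (N : nat) (x y : seq nat) : bool :=
  [&& validw N x, validw N y & child x y || child y x].

Definition children (N : nat) (x : seq nat) : seq (seq nat) :=
  map (rcons x) (iota 0 (if x is [::] then N else N.-1)).

Definition nbrs (N : nat) (x : seq nat) : seq (seq nat) :=
  (if x is [::] then [::] else [:: take (size x).-1 x]) ++ children N x.

Fixpoint walkb (N : nat) (k : nat) (x y : seq nat) : bool :=
  match k with
  | 0 => x == y
  | k'.+1 => has (fun z => walkb N k' z y) (nbrs N x)
  end.

(* graph distance: the least k admitting a walk of length k
   (searched up to size x + size y, which always suffices in the tree) *)
Definition dist (N : nat) (x y : seq nat) : nat :=
  find (fun k => walkb N k x y) (iota 0 (size x + size y).+1).

Definition root : seq nat := [::].

Fixpoint words (N : nat) (k : nat) : seq (seq nat) :=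
  match k with
  | 0 => [:: [::]]
  | k'.+1 => flatten [seq children N x | x <- words N k']
  end.
Definition ballcand (N n : nat) : seq (seq nat) :=
  flatten [seq words N k | k <- iota 0 n.+1].

Section Weighted.
Variable R : realType.

Definition is_weight (N : nat) (mu : seq nat -> seq nat -> R) : Prop :=
  forall x y, validw N x -> validw N y ->
    [/\ mu x y = mu y x, 0 <= mu x y & (0 < mu x y <-> adj N x y)].

Definition muv (N : nat) (mu : seq nat -> seq nat -> R) (x : seq nat) : R :=
  \sum_(y <- nbrs N x) mu x y.

(* W_o(n) = sum_{x in B(o,n), y in V, d(o,x) < d(o,y)} mu_xy
   (mu_xy = 0 unless y ~ x, so y ranges over the neighbours of x) *)
Definition Wo (N : nat) (mu : seq nat -> seq nat -> R) (n : nat) : R :=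
  \sum_(x <- ballcand N n | (dist N root x <= n)%N)
    \sum_(y <- nbrs N x | (dist N root x < dist N root y)%N) mu x y.

Definition mlap (N : nat) (mu : seq nat -> seq nat -> R) (m : R)
    (u : seq nat -> R) (x : seq nat) : R :=
  (muv N mu x)^-1 *
    \sum_(y <- nbrs N x) mu x y * (`|u y - u x| `^ (m - 2)) * (u y - u x).

Definition gradn (N : nat) (mu : seq nat -> seq nat -> R)
    (u : seq nat -> R) (x : seq nat) : R :=
  Num.sqrt (\sum_(y <- nbrs N x)
              mu x y / (2 * muv N mu x) * (u y - u x) ^+ 2).

(* u is a nontrivial positive solution of Delta_m u + u^p |grad u|^q <= 0.
   When q < 0 and |grad u(x)| = 0 the term |grad u(x)|^q is +oo, so the
   inequality can only hold where |grad u(x)| > 0; this is required explicitly. *)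
Definition nontriv_pos_sol (N : nat) (mu : seq nat -> seq nat -> R)
    (m p q : R) (u : seq nat -> R) : Prop :=
  (forall x, validw N x -> 0 < u x) /\
  (exists x y, [/\ validw N x, validw N y & u x != u y]) /\
  (forall x, validw N x ->
     (q < 0 -> 0 < gradn N mu u x) /\
     mlap N mu m u x + (u x `^ p) * (gradn N mu u x `^ q) <= 0).

End Weighted.

(* Main.v *)
Require Import Defs.
From HB Require Import structures.
From mathcomp Require Import all_boot all_order all_algebra.
From mathcomp Require Import all_classical all_reals all_analysis.
From mathcomp Require Import ring lra.
Import Order.TTheory GRing.Theory Num.Theory.
Set Implicit Arguments. Unset Strict Implicit. Unset Printing Implicit Defensive.

Lemma validw_cat N x z : validw N (x ++ z) -> validw N x.
Proof. case: x => [//|b t] /= /andP[-> ]; by rewrite all_cat => /andP[]. Qed.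

Definition cbound N (x : seq nat) := if x is [::] then N else N.-1.

Lemma validw_rcons N x a : validw N (rcons x a) = validw N x && (a < cbound N x)%N.
Proof.
case: x => [|b t] /=; first by rewrite andbT.
by rewrite all_rcons; case: (b < N)%N; case: (a < N.-1)%N; case: all.
Qed.

Lemma childrenE N x : children N x = map (rcons x) (iota 0 (cbound N x)).
Proof. by []. Qed.

Lemma mem_children N x y : y \in children N x -> exists2 a, (a < cbound N x)%N & y = rcons x a.
Proof. by rewrite childrenE => /mapP[a]; rewrite mem_iota /= => ? ->; exists a. Qed.

Lemma size_nbrs N x z : z \in nbrs N x -> (size z <= (size x).+1)%N.
Proof.
rewrite /nbrs mem_cat => /orP[|/mem_children[a _ ->]]; last by rewrite size_rcons.
case: x => [//|b t]; rewrite inE => /eqP ->; rewrite size_take /=.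
by case: ifP => // _; apply: leq_trans (leqnSn _) _.
Qed.

Lemma walk_size N k x y : walkb N k x y -> (size y <= size x + k)%N.
Proof.
elim: k x => [|k IH] x /=; first by move/eqP ->; rewrite addn0.
move/hasP=> [z zn /IH]; move: (size_nbrs zn) => h1 h2.
rewrite addnS; apply: leq_trans h2 _; by rewrite -addSn leq_add2r.
Qed.

Lemma walk_snoc N k x z z' : walkb N k x z -> z' \in nbrs N z -> walkb N k.+1 x z'.
Proof.
elim: k x => [|k IH] x /=.
  by move/eqP-> => h; apply/hasP; exists z'.
by move/hasP=> [w wn /IH h] h'; apply/hasP; exists w => //; apply: h.
Qed.

Lemma rcons_in_nbrs N x a : (a < cbound N x)%N -> rcons x a \in nbrs N x.
Proof. by move=> h; rewrite /nbrs mem_cat childrenE map_f ?orbT // mem_iota. Qed.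

Lemma walk_root N x : validw N x -> walkb N (size x) Defs.root x.
Proof.
elim/last_ind: x => [//|y a IH]; rewrite validw_rcons => /andP[vy ha].
rewrite size_rcons; apply: walk_snoc (IH vy) _; exact: rcons_in_nbrs.
Qed.

Lemma find_iota_last (P : pred nat) n : P n -> (forall k, (k < n)%N -> ~~ P k) ->
  find P (iota 0 n.+1) = n.
Proof.
move=> Pn hk; rewrite -addn1 iotaD find_cat.
have -> : has P (iota 0 n) = false.
  by apply/negbTE/hasPn => k; rewrite mem_iota => /andP[_ ]; apply: hk.
by rewrite size_iota /= Pn addn0.
Qed.

Lemma dist_root N x : validw N x -> dist N Defs.root x = size x.
Proof.
move=> vx; rewrite /dist /= add0n; apply: find_iota_last; first exact: walk_root.
move=> k hk; apply/negP => /walk_size; rewrite /= add0n leqNgt hk //.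
Qed.

Lemma mem_words N k x : x \in words N k -> validw N x /\ size x = k.
Proof.
elim: k x => [|k IH] x /=; first by rewrite inE => /eqP ->.
move/flattenP=> [c /mapP[y /IH [vy sy] ->] /mem_children [a ha ->]].
by rewrite validw_rcons vy ha size_rcons sy.
Qed.

Local Open Scope ring_scope.

Definition zp (x : seq nat) : nat := find (fun a : nat => a != 0%N) x.
Definition allz (x : seq nat) : bool := all (fun a : nat => a == 0%N) x.
Definition hh (x : seq nat) : int := ((size x)%:Z - 2 * (zp x)%:Z)%R.

Lemma allz_rcons x a : allz (rcons x a) = allz x && (a == 0%N).
Proof. by rewrite /allz all_rcons andbC. Qed.

Lemma zp_allz x : allz x -> zp x = size x.
Proof. by elim: x => [//|b t IH] /= /andP[/eqP -> /IH]; rewrite /zp /= => ->. Qed.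

Lemma zp_rcons x a : zp (rcons x a) =
  if allz x then (if a == 0%N then (size x).+1 else size x) else zp x.
Proof.
elim: x => [|b t IH] /=; first by rewrite /zp /=; case: eqP.
rewrite /zp /= -/(zp (rcons t a)) IH /zp; case: eqP => //= _.
by case: (allz t) => //; case: eqP.
Qed.




Lemma hh_rcons x a : hh (rcons x a) =
  if allz x && (a == 0%N) then hh x - 1 else hh x + 1.
Proof.
rewrite /hh zp_rcons size_rcons; case hx: (allz x) => /=.
  rewrite (zp_allz hx); case: eqP => _ /=.
  - rewrite -addn1 !PoszD mulrDr; ring.
  - rewrite -addn1 !PoszD; ring.
rewrite -addn1 !PoszD; ring.
Qed.

Section W.
Variable R : realType.
Variable s : R.
Hypothesis s0 : 0 < s.

Definition wt (x : seq nat) : R := if allz x then s ^ hh x else s ^ (hh x - 1).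

Lemma wt_gt0 x : 0 < wt x.
Proof. by rewrite /wt; case: ifP => _; apply: exprz_gt0. Qed.

Lemma sne0 : s != 0. Proof. by rewrite gt_eqF. Qed.

Lemma wt_rcons x a : wt (rcons x a) =
  if allz x then (if a == 0%N then wt x / s else wt x) else s * wt x.
Proof.
rewrite /wt allz_rcons hh_rcons; case hx: (allz x) => /=.
  case: eqP => _ /=; last by rewrite addrK.
  by rewrite expfzDr ?sne0 // exprN1.
by rewrite addrK -{1}(subrK 1 (hh x)) expfzDr ?sne0 // expr1z mulrC.
Qed.

Definition U x : R := if allz x then wt x / s else wt x.

Lemma U_gt0 x : 0 < U x.
Proof. by rewrite /U; case: ifP => _; rewrite ?divr_gt0 ?wt_gt0. Qed.

Definition muw (N : nat) (x y : seq nat) : R :=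
  if adj N x y then wt (if (size x < size y)%N then y else x) else 0.

Lemma adjC N x y : adj N x y = adj N y x.
Proof. by rewrite /adj orbC; case: (validw N x); case: (validw N y). Qed.

Lemma adj_size N x y : adj N x y -> (size x < size y)%N || (size y < size x)%N.
Proof.
by move=> /and3P[_ _ /orP[|] /andP[/eqP -> _]]; rewrite ltnSn ?orbT.
Qed.

Lemma muw_weight N : is_weight N (muw N).
Proof.
move=> x y vx vy; rewrite /muw adjC; split.
- case: ifP => // /adj_size /orP[] h.
  + by rewrite h ltnNge ltnW.
  + by rewrite h ltnNge ltnW.
- by case: ifP => // _; apply/ltW/wt_gt0.
- split; first by case: ifP => //; rewrite ltxx.
  by rewrite adjC => ->; apply: wt_gt0.
Qed.

Lemma muw_child N x a : validw N x -> (a < cbound N x)%N ->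
  muw N x (rcons x a) = wt (rcons x a).
Proof.
move=> vx ha; rewrite /muw size_rcons ltnSn.
have -> : adj N x (rcons x a) = true.
  rewrite /adj vx validw_rcons vx ha /= /child size_rcons eqxx /=.
  by rewrite -cats1 take_size_cat // eqxx.
done.
Qed.

Lemma muw_parent N y b : validw N (rcons y b) ->
  muw N (rcons y b) y = wt (rcons y b).
Proof.
move=> v; move: (v); rewrite validw_rcons => /andP[vy hb].
rewrite /muw size_rcons ltnNge leqnSn /=.
have -> : adj N (rcons y b) y = true.
  rewrite /adj v vy /= /child size_rcons eqxx /=.
  by rewrite -cats1 take_size_cat // eqxx orbT.
done.
Qed.

Lemma nbrs_rcons N y b : nbrs N (rcons y b) = y :: map (rcons (rcons y b)) (iota 0 N.-1).
Proof.
rewrite /nbrs /children; have -> : take (size (rcons y b)).-1 (rcons y b) = y.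
  by rewrite size_rcons -cats1 take_size_cat.
by case: y.
Qed.

Lemma sum_const_iota1 n (c : R) : \sum_(a <- iota 1 n) c = c *+ n.
Proof.
have -> : iota 1 n = index_iota 1 n.+1 by rewrite /index_iota subn1.
by rewrite sumr_const_nat subn1.
Qed.

Lemma nbrs_sum N (F : int -> R) x : (2 <= N)%N -> validw N x ->
  \sum_(y <- nbrs N x) muw N x y * F (hh y) =
  U x * F (hh x - 1) + (s * U x * F (hh x + 1)) *+ N.-1.
Proof.
case: N => [//|[//|n]] _ vx.
have sumC : forall x0, validw n.+2 x0 -> cbound n.+2 x0 = n.+2 \/ cbound n.+2 x0 = n.+1 ->
   (forall a, (0 < a)%N -> wt (rcons x0 a) = s * U x0) ->
   (forall a, (0 < a)%N -> hh (rcons x0 a) = hh x0 + 1) ->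
   forall k, (k < cbound n.+2 x0)%N ->
   \sum_(a <- iota 1 k) muw n.+2 x0 (rcons x0 a) * F (hh (rcons x0 a)) =
   (s * U x0 * F (hh x0 + 1)) *+ k.
  move=> x0 v0 _ hw hhh k hk; rewrite -sum_const_iota1 big_seq [RHS]big_seq.
  apply: eq_bigr => a; rewrite mem_iota => /andP[a1 a2].
  rewrite muw_child // ?hw ?hhh //; apply: leq_trans hk; by rewrite add1n in a2.
case/lastP: x vx => [|y c] vx.
  rewrite /nbrs cat0s childrenE big_map.
  rewrite -[cbound n.+2 [::]]/n.+2 -[iota 0 n.+2]/(0%N :: iota 1 n.+1) big_cons.
  rewrite (sumC [::] vx (or_introl erefl)) //.
  + rewrite (muw_child (a := 0%N)) // -[rcons [::] 0%N]/(rcons [::] 0%N) wt_rcons hh_rcons /=.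
    by rewrite /U /= mulrSr.
  + by move=> a a0; rewrite wt_rcons /= (negbTE (lt0n_neq0 a0)) /U /= mulrC divfK ?sne0.
  + by move=> a a0; rewrite hh_rcons /= (negbTE (lt0n_neq0 a0)).
rewrite nbrs_rcons big_cons muw_parent // big_map /=.
have cb : cbound n.+2 (rcons y c) = n.+1 by case: y {vx}.
case hz: (allz (rcons y c)).
- move: (hz); rewrite allz_rcons => /andP[hy /eqP hc]; subst c.
  rewrite big_cons (sumC (rcons y 0%N) vx (or_intror cb)) ?cb //.
  + have e1 : hh y = hh (rcons y 0%N) + 1 by rewrite hh_rcons hy eqxx /= subrK.
    have e2 : hh (rcons (rcons y 0%N) 0%N) = hh (rcons y 0%N) - 1 by rewrite hh_rcons hz.
    rewrite muw_child ?cb // (wt_rcons (rcons y 0%N)) hz eqxx e1 e2 /U hz mulrS.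
    have e3 : s * (wt (rcons y 0%N) / s) = wt (rcons y 0%N) by rewrite mulrC divfK ?sne0.
    rewrite e3; set X := (_ *+ n); lra.
  + by move=> a a0; rewrite wt_rcons hz (negbTE (lt0n_neq0 a0)) /U hz mulrC divfK ?sne0.
  + by move=> a a0; rewrite hh_rcons hz (negbTE (lt0n_neq0 a0)).
- rewrite big_cons (sumC (rcons y c) vx (or_intror cb)) ?cb //.
  + have e1 : hh y = hh (rcons y c) - 1.
      by move: hz; rewrite hh_rcons allz_rcons => ->; rewrite addrK.
    have e2 : hh (rcons (rcons y c) 0%N) = hh (rcons y c) + 1 by rewrite hh_rcons hz.
    rewrite muw_child ?cb // (wt_rcons (rcons y c)) hz e1 e2 /U hz mulrS.
    set X := (_ *+ n); lra.
  + by move=> a a0; rewrite wt_rcons hz /U hz.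
  + by move=> a a0; rewrite hh_rcons hz.
Qed.

End W.

Lemma validw_take N x k : validw N x -> validw N (take k x).
Proof. by rewrite -{1}(cat_take_drop k x) => /validw_cat. Qed.

Section C.
Variable R : realType.
Variable s : R.
Hypothesis s0 : 0 < s.
Variable N : nat.
Hypothesis N2 : (2 <= N)%N.

Local Notation wt := (wt s).
Local Notation mu := (muw s N).

Lemma cbound_gt0 x : (0 < cbound N x)%N.
Proof. by case: x => //=; case: N N2 => [|[|]]. Qed.

Lemma inner_eq x : validw N x ->
  \sum_(y <- nbrs N x | (dist N Defs.root x < dist N Defs.root y)%N) mu x y =
  \sum_(y <- children N x) wt y.
Proof.
move=> vx; rewrite /nbrs big_cat /=.
have -> : \sum_(y <- (if x is [::] then [::] else [:: take (size x).-1 x]) |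
      (dist N Defs.root x < dist N Defs.root y)%N) mu x y = 0.
  case: x vx => [|b t] vx; first by rewrite big_nil.
  rewrite big_cons big_nil (dist_root vx) (dist_root (validw_take _ vx)).
  by rewrite size_take /= ltnSn ltnNge leqnSn.
rewrite add0r big_seq_cond [RHS]big_seq; apply: eq_big.
  move=> y; case hy: (y \in children N x) => //=.
  case/mem_children: hy => a ha ->; rewrite (dist_root vx) dist_root ?size_rcons //.
  by rewrite ltnSn.
  by rewrite validw_rcons vx.
move=> y /andP[/mem_children [a ha ->] _]; exact: muw_child.
Qed.

Definition V k := \sum_(y <- words N k) wt y.
Definition Z k := \sum_(y <- words N k | allz y) wt y.

Lemma Wo_eq n : Wo N mu n = \sum_(k <- iota 0 n.+1) V k.+1.
Proof.
rewrite /Wo /ballcand big_flatten big_map big_seq [RHS]big_seq.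
apply: eq_bigr => k; rewrite mem_iota add0n ltnS => /andP[_ kn].
rewrite /V /= big_flatten big_map big_seq_cond [RHS]big_seq; apply: eq_big.
  by move=> x; case hx: (x \in words N k) => //=; case/mem_words: hx => vx sx; rewrite dist_root // sx.
by move=> x /andP[/mem_words [vx _] _]; rewrite inner_eq.
Qed.

Lemma Z0 : Z 0 = 1.
Proof. by rewrite /Z /= big_cons big_nil /= addr0 /wt /= /hh /zp /= expr0z. Qed.

Lemma ZS k : Z k.+1 = Z k / s.
Proof.
rewrite /Z /= big_flatten big_map mulr_suml [RHS]big_mkcond big_seq [RHS]big_seq /=.
apply: eq_bigr => x /mem_words [vx _]; rewrite childrenE big_map.
move: (cbound_gt0 x); case: (cbound N x) => [//|c] _.
rewrite -[iota 0 c.+1]/(0%N :: iota 1 c) big_cons allz_rcons eqxx andbT.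
rewrite big1_seq ?addr0; last first.
  by move=> a /andP[]; rewrite allz_rcons => /andP[_ /eqP ->]; rewrite mem_iota.
by case: ifP => hz //; rewrite wt_rcons // hz.
Qed.

Lemma ZE k : Z k = (s^-1) ^+ k.
Proof. elim: k => [|k IH]; first by rewrite Z0 expr0. by rewrite ZS IH exprSr. Qed.

Lemma V_ge_Z k : Z k <= V k.
Proof.
rewrite /Z /V big_mkcond /=; apply: ler_sum => x _.
by case: ifP => _ //; apply/ltW/wt_gt0.
Qed.

Lemma V_ge0 k : 0 <= V k.
Proof. by apply: sumr_ge0 => x _; apply/ltW/wt_gt0. Qed.

Lemma VS k : V k.+1 <= N%:R * s * V k + (s^-1 + N%:R) * Z k.
Proof.
rewrite /V /Z /= big_flatten big_map mulr_sumr mulr_sumr [X in _ + X]big_mkcond -big_split /=.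
rewrite big_seq [X in _ <= X]big_seq; apply: ler_sum => x /mem_words [vx _].
rewrite childrenE big_map.
have cN : (cbound N x <= N)%N by case: x {vx} => //=; rewrite leq_pred.
have w0 := wt_gt0 s0 x.
move: cN (cbound_gt0 x); case: (cbound N x) => [//|c] cN _.
rewrite -[iota 0 c.+1]/(0%N :: iota 1 c) big_cons.
have Hc : (c%:R : R) <= N%:R by rewrite ler_nat ltnW.
case hz: (allz x).
- rewrite wt_rcons // hz eqxx (eq_big_seq (fun _ => wt x)); last first.
    by move=> a; rewrite mem_iota => /andP[a0 _]; rewrite wt_rcons // hz (negbTE (lt0n_neq0 a0)).
  rewrite sum_const_iota1 -mulr_natr mulrDl.
  have : 0 <= N%:R * s * wt x by apply: mulr_ge0; [apply: mulr_ge0|]; rewrite ?ler0n ?ltW.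
  have : wt x * c%:R <= N%:R * wt x by rewrite mulrC ler_wpM2r // ltW.
  rewrite mulrC [wt x / s]mulrC; lra.
- rewrite wt_rcons // hz (eq_big_seq (fun _ => s * wt x)); last first.
    by move=> a _; rewrite wt_rcons // hz.
  rewrite sum_const_iota1 -mulrS addr0 -[s * wt x *+ c.+1]mulr_natl -mulrA.
  by rewrite ler_wpM2r ?ler_nat // mulr_ge0 // ltW.
Qed.

Lemma V_le k : s <= (4 * N%:R)^-1 -> V k <= 4 * (s^-1) ^+ k.
Proof.
move=> hs; have N0 : (0 : R) < N%:R by rewrite ltr0n; case: N N2.
have r_ge : 4 * N%:R <= s^-1 by rewrite -[4 * _]invrK lef_pV2 ?posrE ?invr_gt0 ?mulr_gt0.
have r1 : 1 <= s^-1.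
  apply: le_trans r_ge; have : (1 : R) <= N%:R by rewrite ler1n; case: N N2.
  lra.
elim: k => [|k IH].
  by rewrite /V /= big_cons big_nil addr0 /wt /= /hh /zp /= expr0z expr0; lra.
apply: le_trans (VS k) _; rewrite ZE exprS.
have Ns : N%:R * s <= 1/4.
  have := ler_wpM2l (ltW N0) hs => h.
  have e : N%:R * (4 * N%:R)^-1 = (1/4 : R) by field; rewrite gt_eqF.
  lra.
have rk0 : 0 <= s^-1 ^+ k by rewrite exprn_ge0 // invr_ge0 ltW.
have h1 : N%:R * s * V k <= 1/4 * (4 * s^-1 ^+ k).
  apply: ler_pM => //; [exact: mulr_ge0 (ler0n _ _) (ltW s0) | exact: V_ge0].
have h2 : (s^-1 + N%:R) * s^-1 ^+ k <= (s^-1 + s^-1) * s^-1 ^+ k.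
  by rewrite ler_wpM2r // lerD2l; lra.
nra.
Qed.


Lemma iotaSr n : iota 0 n.+1 = iota 0 n ++ [:: n].
Proof. by rewrite -addn1 iotaD. Qed.

Lemma Wo_bounds n : s <= (4 * N%:R)^-1 ->
  (s^-1) ^+ n <= Wo N mu n /\ Wo N mu n <= 8 * s^-1 * (s^-1) ^+ n.
Proof.
move=> hs; have N0 : (0 : R) < N%:R by rewrite ltr0n; case: N N2.
have r_ge : 4 * N%:R <= s^-1 by rewrite -[4 * _]invrK lef_pV2 ?posrE ?invr_gt0 ?mulr_gt0.
have r2 : 2 <= s^-1.
  apply: le_trans r_ge; have : (2 : R) <= N%:R by rewrite (ler_nat _ 2).
  lra.
rewrite Wo_eq; split.
  rewrite iotaSr big_cat big_seq1 /=.
  have : 0 <= \sum_(k <- iota 0 n) V k.+1 by apply: sumr_ge0 => k _; apply: V_ge0.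
  have := V_ge_Z n.+1; rewrite ZE exprS.
  have : s^-1 ^+ n <= s^-1 * s^-1 ^+ n.
    by rewrite ler_peMl // ?exprn_ge0 //; lra.
  lra.
have h : \sum_(k <- iota 0 n.+1) V k.+1 <= \sum_(k <- iota 0 n.+1) 4 * s^-1 ^+ k.+1.
  by apply: ler_sum => k _; apply: V_le.
apply: le_trans h _; rewrite -mulr_sumr.
suff : \sum_(i <- iota 0 n.+1) s^-1 ^+ i.+1 <= 2 * (s^-1 * s^-1 ^+ n) by lra.
elim: n => [|n IH]; first by rewrite big_cons big_nil expr1 expr0; lra.
rewrite iotaSr big_cat big_seq1 /=.
have : s^-1 ^+ n.+1 <= s^-1 * s^-1 ^+ n.+1.
    by rewrite ler_peMl // ?exprn_ge0 //; lra.
rewrite !exprS in IH *; nra.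
Qed.

End C.

Lemma expR_ln_nat (R : realType) (r : R) n : 0 < r -> expR (ln r * n%:R) = r ^+ n.
Proof. by move=> r0; rewrite expRM_natr lnK. Qed.


Section D.
Variable R : realType.
Variable N : nat.
Hypothesis N2 : (2 <= N)%N.
Variables (s t m p q : R).
Hypothesis s0 : 0 < s.
Hypothesis t1 : 1 < t.
Hypothesis hpq : p + q = m - 1.

Local Notation mu := (muw s N).
Definition sigw := (N.-1)%:R * s.
Definition aa := 1 - t^-1.
Definition bb := t - 1.
Definition GG := (aa ^+ 2 + sigw * bb ^+ 2) / (2 * (1 + sigw)).
Definition KEY := (- (aa `^ (m - 1)) + sigw * bb `^ (m - 1)) / (1 + sigw) + (Num.sqrt GG) `^ q.

Definition uu (x : seq nat) : R := t ^ hh x.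

Lemma t0 : 0 < t. Proof. exact: lt_trans t1. Qed.
Lemma uu_gt0 x : 0 < uu x. Proof. exact: exprz_gt0 t0. Qed.
Lemma sig_ge0 : 0 <= sigw. Proof. by rewrite /sigw mulr_ge0 ?ler0n // ltW. Qed.
Lemma aa_gt0 : 0 < aa.
Proof. rewrite /aa subr_gt0 invf_lt1 //; exact: t0. Qed.
Lemma bb_gt0 : 0 < bb. Proof. by rewrite /bb subr_gt0. Qed.
Lemma GG_gt0 : 0 < GG.
Proof.
rewrite /GG divr_gt0 //; last by have := sig_ge0; lra.
have := aa_gt0; have := sig_ge0 => h1 h2.
by apply: ltr_wpDr; [rewrite mulr_ge0 // sqr_ge0 | rewrite exprn_gt0].
Qed.

Lemma phi_pos y : 0 < y -> `|y| `^ (m - 2) * y = y `^ (m - 1).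
Proof.
move=> y0; rewrite ger0_norm ?ltW // -{2}(powRr1 (ltW y0)) -powRD; last by rewrite (gt_eqF y0) implybT.
by congr (_ `^ _); ring.
Qed.

Lemma phi_neg y : 0 < y -> `|- y| `^ (m - 2) * (- y) = - y `^ (m - 1).
Proof. by move=> y0; rewrite normrN mulrN phi_pos. Qed.

Lemma up_val x : t ^ (hh x - 1) - uu x = - (uu x * aa).
Proof.
rewrite /uu expfzDr ?gt_eqF ?t0 // exprN1 /aa; ring.
Qed.

Lemma down_val x : t ^ (hh x + 1) - uu x = uu x * bb.
Proof. rewrite /uu expfzDr ?gt_eqF ?t0 // expr1z /bb; ring. Qed.

Lemma muv_eq x : validw N x -> muv N mu x = U s x * (1 + sigw).
Proof.
move=> vx; have H := nbrs_sum s0 (fun _ => 1) N2 vx; cbv beta in H.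
rewrite /muv; under eq_bigr => y _ do rewrite -[muw _ _ _ _]mulr1.
by rewrite H /sigw -mulr_natr; ring.
Qed.

Lemma mlap_eq x : validw N x ->
  mlap N mu m uu x = uu x `^ (m - 1) * ((- (aa `^ (m - 1)) + sigw * bb `^ (m - 1)) / (1 + sigw)).
Proof.
move=> vx; have H := nbrs_sum s0 (fun z => `|t ^ z - uu x| `^ (m - 2) * (t ^ z - uu x)) N2 vx.
cbv beta in H; rewrite /mlap muv_eq //.
under eq_bigr => y _ do rewrite -mulrA.
rewrite [X in _ * X]H up_val down_val phi_neg ?mulr_gt0 ?uu_gt0 ?aa_gt0 //.
rewrite phi_pos ?mulr_gt0 ?uu_gt0 ?bb_gt0 // !powRM ?ltW ?uu_gt0 ?aa_gt0 ?bb_gt0 //.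
have U0 := U_gt0 s0 x; have := sig_ge0 => hs.
have hs' : 0 <= N.-1%:R * s by exact: mulr_ge0 (ler0n _ _) (ltW s0).
rewrite /sigw -mulr_natr; field.
by rewrite (gt_eqF U0) andbT; apply: lt0r_neq0; lra.
Qed.

Lemma gradn_eq x : validw N x -> gradn N mu uu x = uu x * Num.sqrt GG.
Proof.
move=> vx; have H := nbrs_sum s0 (fun z => (2 * muv N mu x)^-1 * (t ^ z - uu x) ^+ 2) N2 vx.
cbv beta in H; rewrite /gradn.
rewrite (eq_bigr (fun y => mu x y * ((2 * muv N mu x)^-1 * (t ^ hh y - uu x) ^+ 2))); last first.
  by move=> y _; rewrite /uu; ring.
rewrite H up_val down_val muv_eq //.
have U0 := U_gt0 s0 x; have := sig_ge0 => hs.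
have hs' : 0 <= N.-1%:R * s by exact: mulr_ge0 (ler0n _ _) (ltW s0).
have -> : U s x * ((2 * (U s x * (1 + sigw)))^-1 * (- (uu x * aa)) ^+ 2) +
  s * U s x * ((2 * (U s x * (1 + sigw)))^-1 * (uu x * bb) ^+ 2) *+ N.-1 = uu x ^+ 2 * GG.
  rewrite /GG /sigw -mulr_natr; field.
  by rewrite (gt_eqF U0) andbT; apply: lt0r_neq0; lra.
by rewrite sqrtrM ?exprn_ge0 ?ltW ?uu_gt0 // sqrtr_sqr ger0_norm // ltW // uu_gt0.
Qed.


Lemma sol_of_key : KEY <= 0 -> nontriv_pos_sol N mu m p q uu.
Proof.
move=> hK; split; first by move=> x _; apply: uu_gt0.
split.
  exists [::], [:: 1%N]; split => //; first by rewrite /= andbT.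
  rewrite /uu /hh /zp /= expr0z.
  have -> : ((1%:Z - 2 * 0%:Z)%R : int) = 1 by [].
  by rewrite expr1z lt_eqF.
move=> x vx; rewrite gradn_eq // mlap_eq //; split.
  by move=> _; rewrite mulr_gt0 ?uu_gt0 // sqrtr_gt0 GG_gt0.
have E0 := uu_gt0 x.
rewrite (powRM q (ltW E0) (sqrtr_ge0 GG)) mulrA -powRD; last by rewrite (gt_eqF E0) implybT.
rewrite hpq -mulrDr; apply: mulr_ge0_le0; first exact: powR_ge0.
exact: hK.
Qed.

End D.

Section E.
Variable R : realType.
Variables m p q : R.
Hypothesis hpq : p + q = m - 1.

Definition KEYf (t sg : R) : R :=
  (- ((1 - t^-1) `^ (m - 1)) + sg * (t - 1) `^ (m - 1)) / (1 + sg) +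
  (Num.sqrt (((1 - t^-1) ^+ 2 + sg * (t - 1) ^+ 2) / (2 * (1 + sg)))) `^ q.

Lemma powR_lt1 (x r : R) : 0 <= x < 1 -> 0 < r -> x `^ r < 1.
Proof.
move=> /andP[x0 x1] r0; have e : (1:R) `^ r = 1 by rewrite powR1.
rewrite -e.
by apply: gt0_ltr_powR => //; rewrite nnegrE // ler01.
Qed.

Lemma case1 : 0 <= p -> 0 < q ->
  exists t sg, [/\ 1 < t, 0 < sg, sg <= 1/8 & KEYf t sg <= 0].
Proof.
move=> p0 q0.
set th := (3/4 : R) `^ q.
have th0 : 0 < th by rewrite powR_gt0.
have th1 : th < 1 by rewrite powR_lt1 //; lra.
set th' := (1 + th) / 2.
have th'0 : 0 < th' by rewrite /th'; lra.
have th'1 : th' < 1 by rewrite /th'; lra.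
set a := th' `^ (p + 1)^-1.
have a0 : 0 < a by rewrite powR_gt0.
have a1 : a < 1 by rewrite powR_lt1 ?invr_gt0 //; [rewrite ltW | lra].
have ap : th' <= a `^ p.
  rewrite /a -powRrM; apply: ger1_powR; first by rewrite th'0 ltW.
  by rewrite ler_pdivrMl; lra.
set t := (1 - a)^-1.
have t1 : 1 < t by rewrite /t invf_gt1; lra.
have t0 : 0 < t by lra.
have ta : 1 - t^-1 = a by rewrite /t invrK; ring.
have tb : t - 1 = t * a by rewrite -ta; field; rewrite gt_eqF.
set T := t `^ (m - 1).
have T0 : 0 <= T by apply: powR_ge0.
set eps := Num.min (1/8 : R) ((1 - th) / 4).
have eps0 : 0 < eps by rewrite lt_min; apply/andP; split; lra.
have eps1 : eps <= 1/8 by rewrite ge_min lexx.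
have eps2 : eps <= (1 - th) / 4 by rewrite ge_min lexx orbT.
set D := 1 + t ^+ 2 + T.
have D1 : 1 <= D by rewrite /D; have := sqr_ge0 t; lra.
set sg := eps / D.
have sg0 : 0 < sg by rewrite divr_gt0 //; lra.
have sgD : sg * D = eps by rewrite /sg divfK // gt_eqF //; lra.
have tD : t ^+ 2 <= D by rewrite /D; lra.
have TD : 1 + T <= D by rewrite /D; have := sqr_ge0 t; lra.
have sgt : sg * t ^+ 2 <= eps by nra.
have sgT : sg * (1 + T) <= eps by nra.
have sge : sg <= eps by nra.
exists t, sg; split => //; first lra.
rewrite /KEYf ta tb.
have G : Num.sqrt ((a ^+ 2 + sg * (t * a) ^+ 2) / (2 * (1 + sg))) <= 3/4 * a.
  rewrite -(ger0_norm (_ : 0 <= 3/4 * a)); last by rewrite mulr_ge0 // ?ltW //.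
  rewrite -sqrtr_sqr ler_sqrt; last by rewrite exprn_ge0 // mulr_ge0 // ltW.
  rewrite ler_pdivrMr; last lra.
  rewrite exprMn; have := sqr_ge0 a; have := sqr_ge0 t; nra.
have S : (Num.sqrt ((a ^+ 2 + sg * (t * a) ^+ 2) / (2 * (1 + sg)))) `^ q <= th * a `^ q.
  rewrite /th -powRM; [|lra|exact: ltW].
  apply: ge0_ler_powR; rewrite ?nnegrE ?sqrtr_ge0 //; [exact: ltW|].
  by apply: mulr_ge0; [lra | exact: ltW].
rewrite (powRM _ (ltW t0) (ltW a0)) -/T.
have Aq : a `^ (m - 1) = a `^ q * a `^ p.
  by rewrite -hpq addrC powRD // (gt_eqF a0) implybT.
rewrite Aq.
set aq := a `^ q; set apw := a `^ p.
have aq0 : 0 < aq by rewrite powR_gt0.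
have ap1 : apw <= 1.
  have e : (1:R) `^ p = 1 by rewrite powR1.
  rewrite /apw -e; apply: ge0_ler_powR => //; rewrite ?nnegrE; [exact: ltW|exact: ler01|exact: ltW].
suff : th * aq <= aq * apw * (1 - sg * T) / (1 + sg).
  move: S; set X := Num.sqrt _ `^ q => S h.
  have -> : (- (aq * apw) + sg * (T * (aq * apw))) / (1 + sg) = - (aq * apw * (1 - sg * T) / (1 + sg)).
    by field; apply/lt0r_neq0; lra.
  have S2 : X <= th * aq by exact: S.
  lra.
rewrite ler_pdivlMr; last lra.
have sT0 : 0 <= sg * T by apply: mulr_ge0 => //; exact: ltW.
have ap' : th' <= apw by exact: ap.
have sgT' : sg + sg * T <= eps by move: sgT; rewrite mulrDr mulr1.
have p1 : 0 <= (apw - th') * (1 - sg * T) by apply: mulr_ge0; lra.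
have p2 : 0 <= (1 - th') * (sg * T) by apply: mulr_ge0; lra.
have p3 : 0 <= (1 - th) * sg by apply: mulr_ge0; lra.
have h1 : th * (1 + sg) <= apw * (1 - sg * T) by rewrite /th' in p1 p2 ap' *; lra.
nra.
Qed.


Lemma powR_anti (x y r : R) : 0 < x -> x <= y -> 0 <= r -> y `^ (- r) <= x `^ (- r).
Proof.
move=> x0 xy r0; have y0 : 0 < y by exact: (lt_le_trans x0 xy).
rewrite !powRN lef_pV2; last 2 first.
- by rewrite posrE powR_gt0.
- by rewrite posrE powR_gt0.
apply: ge0_ler_powR => //; rewrite ?nnegrE; exact: ltW.
Qed.

Lemma case2 : 1 < m -> q < 0 -> m < 3 ->
  exists t sg, [/\ 1 < t, 0 < sg, sg <= 1/8 & KEYf t sg <= 0].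
Proof.
move=> m1 q0 m3.
set Ga := (16 : R) `^ (- 2 / q).
have Ga1 : 1 <= Ga.
  have e : (16:R) `^ 0 = 1 by rewrite powRr0.
  have h : (1:R) <= 16 by lra.
  rewrite /Ga -[X in X <= _]e; apply: (ler_powR h).
  by apply: mulr_le0; [lra | rewrite invr_le0; exact: ltW].
set K := 16 * Ga - 1.
have K0 : 15 <= K by rewrite /K; lra.
set tau := (8 * K) `^ (3 - m)^-1.
have tau0 : 0 <= tau by apply: powR_ge0.
set t := 2 + 8 * K + tau.
have t2 : 2 <= t by rewrite /t; lra.
have t0 : 0 < t by lra.
have tK : 8 * K + 2 <= t by rewrite /t; lra.
have ttau : tau <= t by rewrite /t; lra.
set sg := K / t ^+ 2.
have sg0 : 0 < sg by rewrite /sg divr_gt0 // ?exprn_gt0; lra.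
have sg8 : sg <= 1/8.
  rewrite /sg ler_pdivrMr ?exprn_gt0 //; nra.
have sgt : sg * t ^+ 2 = K by rewrite /sg divfK // expf_neq0 // gt_eqF.
exists t, sg; split => //; first lra.
set a := 1 - t^-1.
have ti : t^-1 <= 1/2 by rewrite -[t^-1]mul1r ler_pdivrMr //; lra.
have ti0 : 0 < t^-1 by rewrite invr_gt0.
have a2 : 1/2 <= a by rewrite /a; lra.
have a1 : a <= 1 by rewrite /a; lra.
have tb : t - 1 = t * a by rewrite /a; field; rewrite gt_eqF.
rewrite /KEYf -/a tb.
have G : Num.sqrt Ga <= Num.sqrt ((a ^+ 2 + sg * (t * a) ^+ 2) / (2 * (1 + sg))).
  rewrite ler_sqrt; last by rewrite divr_ge0 //; [rewrite addr_ge0 ?sqr_ge0 // mulr_ge0 ?sqr_ge0 //; lra | lra].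
  rewrite ler_pdivlMr; last lra.
  rewrite exprMn (mulrA sg) sgt.
  have ha : 1/4 <= a ^+ 2 by rewrite expr2; nra.
  have p1 : 0 <= (a ^+ 2 - 1/4) * (16 * Ga) by apply: mulr_ge0; lra.
  have p2 : 0 <= Ga * (1/8 - sg) by apply: mulr_ge0; lra.
  rewrite /K; lra.
have S : (Num.sqrt ((a ^+ 2 + sg * (t * a) ^+ 2) / (2 * (1 + sg)))) `^ q <= 1/16.
  rewrite -(opprK q); apply: le_trans (powR_anti _ G _) _; [by rewrite sqrtr_gt0; lra | rewrite oppr_ge0; exact: ltW |].
  rewrite opprK.
  rewrite -powR12_sqrt; last lra.
  rewrite -powRrM /Ga -powRrM.
  have -> : - 2 / q * (2^-1 * q) = -1 by field; rewrite lt_eqF.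
  by rewrite powR_inv1; lra.
have A : 1/4 <= a `^ (m - 1).
  have h1 : (1/2 : R) `^ (m - 1) <= a `^ (m - 1).
    by apply: ge0_ler_powR; rewrite ?nnegrE; lra.
  have h2 : (1/2 : R) `^ 2 <= (1/2) `^ (m - 1).
    by apply: ger_powR; [apply/andP; split; lra | lra].
  have e : (1/2 : R) `^ 2 = 1/4 by rewrite -[2]/(2%:R) powR_mulrn; lra.
  lra.
have X : sg * (t * a) `^ (m - 1) <= 1/8.
  have h1 : (t * a) `^ (m - 1) <= t `^ (m - 1).
    apply: ge0_ler_powR; rewrite ?nnegrE; [lra | nra | lra | nra].
  have h2 : t `^ (m - 1) = t `^ (m - 3) * t ^+ 2.
    rewrite -[X in _ * X]powR_mulrn; last lra.
    rewrite -powRD; last by rewrite (gt_eqF t0) implybT.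
    by congr (_ `^ _); rewrite /=; lra.
  have h3 : 8 * K <= t `^ (3 - m).
    have e : (8 * K) `^ ((3 - m)^-1 * (3 - m)) = 8 * K.
      by rewrite mulVf ?gt_eqF ?powRr1 //; lra.
    rewrite -{1}e powRrM -/tau; apply: ge0_ler_powR; rewrite ?nnegrE //; lra.
  have h4 : t `^ (m - 3) <= (8 * K)^-1.
    have -> : m - 3 = - (3 - m) by ring.
    rewrite powRN lef_pV2; [exact: h3 | rewrite posrE; exact: powR_gt0 | rewrite posrE; lra].
  have h5 : 0 <= (t * a) `^ (m - 1) by apply: powR_ge0.
  have : sg * t `^ (m - 1) <= 1/8.
    have e : sg * (t `^ (m - 3) * t ^+ 2) = K * t `^ (m - 3) by rewrite -sgt; ring.
    rewrite h2 e.
    have : K * (8 * K)^-1 = 1/8 by field; lra.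
    have : 0 <= t `^ (m - 3) by apply: powR_ge0.
    nra.
  nra.
set X1 := Num.sqrt _ `^ q in S *.
have : (- a `^ (m - 1) + sg * (t * a) `^ (m - 1)) / (1 + sg) <= - (1/9).
  rewrite ler_pdivrMr; last lra.
  nra.
lra.
Qed.

End E.

Unset Implicit Arguments.

Theorem mainTheorem12 (R : realType) (N : nat) (m p q : R) :
  (2 <= N)%N -> 1 < m ->
  ((p + q = m - 1 /\ 0 <= p /\ 0 < q) \/ (p + q = m - 1 /\ q < 0 /\ m < 3)) ->
  exists lam : R, 0 < lam /\
  exists mu : seq nat -> seq nat -> R,
    [/\ is_weight N mu,
        (exists c C : R, 0 < c /\ 0 < C /\
           forall n : nat, (2 <= n)%N ->
             c * expR (lam * n%:R) <= Wo N mu n /\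
             Wo N mu n <= C * expR (lam * n%:R))
      & exists u : seq nat -> R, nontriv_pos_sol N mu m p q u].
Proof.
move=> N2 m1 H.
have hpq : p + q = m - 1 by case: H => [[]|[]].
have [t [sg [t1 sg0 sg8 hK]]] : exists t sg, [/\ 1 < t, 0 < sg, sg <= 1/8 & KEYf m q t sg <= 0].
  case: H => [[_ [p0 q0]]|[_ [q0 m3]]]; [exact: case1 hpq p0 q0 | exact: case2 m1 q0 m3].
have M0 : (0 : R) < N.-1%:R by rewrite ltr0n; case: (N) N2 => [|[|]].
have N0 : (0 : R) < N%:R by rewrite ltr0n; case: (N) N2 => [|[|]].
have MN : (N%:R : R) <= 2 * N.-1%:R.
  have : (N <= 2 * N.-1)%N.
    case: (N) N2 => [//|[//|n]] _ /=; rewrite mul2n -addnn addSn addnS !ltnS; exact: leq_addr.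
  by rewrite -(ler_nat R) natrM.
set s := sg / N.-1%:R.
have s0 : 0 < s by rewrite divr_gt0.
have sgs : sigw N s = sg by rewrite /sigw /s mulrC divfK // gt_eqF.
have hs : s <= (4 * N%:R)^-1.
  rewrite /s ler_pdivrMr //; apply: le_trans sg8 _.
  rewrite [X in _ <= X]mulrC ler_pdivlMr; last by rewrite mulr_gt0.
  lra.
have M1 : (1:R) <= N.-1%:R by rewrite ler1n; case: (N) N2 => [|[|]].
have s8 : s <= 1/8.
  rewrite /s ler_pdivrMr //; have : 0 <= sg * (N.-1%:R - 1) by apply: mulr_ge0; lra.
  lra.
have r1 : 1 < s^-1 by rewrite invf_gt1 //; lra.
exists (ln s^-1); split; first by rewrite ln_gt0.
exists (muw s N); split.
- exact: muw_weight.
- exists 1, (8 * s^-1); split; first lra.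
  split; first by rewrite mulr_gt0 //; lra.
  move=> n _; rewrite expR_ln_nat; last lra.
  have [h1 h2] := Wo_bounds s0 N2 n hs.
  by rewrite mul1r; split.
- exists (uu t); apply: (sol_of_key N2 s0 t1 hpq).
  by rewrite /KEY /GG /aa /bb sgs.
Qed.
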